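(* Let $s,t\ge 0$, $r\in\mathbb R$, $\alpha,\beta\in\mathbb R$, and let $$B=\exp\!\big(r p_0+t\,R_{\beta/2}\,p_1\,R_{-\beta/2}\big)\exp\!\big(s\,R_\alpha f_1 R_{-\alpha}\big)\in\mathrm{SL}_3(\mathbb R),$$ where $p_0=\mathrm{diag}(2,-1,-1)$, $p_1=\mathrm{diag}(0,\tfrac12,-\tfrac12)$, $f_1=\begin{pmatrix}0&1&0\\1&0&0\\0&0&0\end{pmatrix}$. Let $\rho\in\hom_0(\mathrm{PSL}_2(\mathbb Z),\mathrm{Isom}(X))$ be given by $\rho(a)([M])=[BB^TM^*]$ and $\rho(b)([M])=[R_{2\pi/3}M]$, and set $\vartheta=2\alpha-\beta$. Then $$\mathrm{tr}(\rho(baba))=\mathrm{tr}(\rho(baba)^{-1})=-\tfrac32\cosh(2s)\cosh(2t)+\tfrac94\cosh^2(2s)-\tfrac34-3\sin^2(\vartheta)\sinh^4(s)\sinh^2(t).$$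
   Context: $X=\mathrm{SL}_3(\mathbb R)/\mathrm{SO}(3)$; $\mathrm{SL}_3(\mathbb R)$ acts by $[M]\mapsto[gM]$ and orientation-preserving isometries are identified with matrices in $\mathrm{SL}_3(\mathbb R)$; $M^*=(M^{-1})^T$, and $[M]\mapsto[BB^TM^*]$ is the inversion at $[B]$. $R_\theta=\begin{pmatrix}1&0&0\\0&\cos\theta&-\sin\theta\\0&\sin\theta&\cos\theta\end{pmatrix}$ and $\exp$ is the matrix exponential. $\mathrm{PSL}_2(\mathbb Z)=\langle a,b\mid a^2=b^3=1\rangle$; $\hom_0(\mathrm{PSL}_2(\mathbb Z),\mathrm{Isom}(X))$ is the set of homomorphisms with $\rho(a)$ an inversion and $\rho(b)$ conjugate to $[M]\mapsto[R_{2\pi/3}M]$. *)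

(* Defs.v *)
From mathcomp Require Import all_boot all_order all_algebra.
From mathcomp Require Import all_classical all_reals all_analysis.
Set Implicit Arguments. Unset Strict Implicit. Unset Printing Implicit Defensive.
Import Order.TTheory GRing.Theory Num.Theory numFieldNormedType.Exports.
Local Open Scope ring_scope.

Section Defs.
Variable R : realType.

Definition mx3 (l : seq (seq R)) : 'M[R]_3 :=
  \matrix_(i < 3, j < 3) nth 0 (nth [::] l i) j.

Definition mexp (A : 'M[R]_3) : 'M[R]_3 :=
  \matrix_(i, j) limn (fun n : nat => (\sum_(k < n) (k`!%:R)^-1 *: A ^+ k) i j).

Definition coshR (x : R) : R := (expR x + expR (- x)) / 2.
Definition sinhR (x : R) : R := (expR x - expR (- x)) / 2.

Definition Rot (th : R) : 'M[R]_3 :=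
  mx3
    [:: [:: 1; 0; 0];
        [:: 0; cos th; - sin th];
        [:: 0; sin th; cos th]].

Definition p0 : 'M[R]_3 := mx3
    [:: [:: 2; 0; 0]; [:: 0; -1; 0]; [:: 0; 0; -1]].
Definition p1 : 'M[R]_3 := mx3
    [:: [:: 0; 0; 0]; [:: 0; 2^-1; 0]; [:: 0; 0; - 2^-1]].
Definition f1 : 'M[R]_3 := mx3
    [:: [:: 0; 1; 0]; [:: 1; 0; 0]; [:: 0; 0; 0]].

Definition mstar (M : 'M[R]_3) : 'M[R]_3 := (invmx M)^T.

Definition SL3 (M : 'M[R]_3) : Prop := \det M = 1.
Definition SO3 (K : 'M[R]_3) : Prop := K^T *m K = 1%:M /\ \det K = 1.

(* X = SL3(R)/SO(3): [M] = [N] iff N = M K for some K in SO(3) *)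
Definition sameX (M N : 'M[R]_3) : Prop := exists K, SO3 K /\ N = M *m K.

Definition rho_a (B M : 'M[R]_3) : 'M[R]_3 := B *m B^T *m mstar M.
Definition rho_b (M : 'M[R]_3) : 'M[R]_3 := Rot (2 * pi / 3) *m M.

Definition rho_baba (B M : 'M[R]_3) : 'M[R]_3 :=
  rho_b (rho_a B (rho_b (rho_a B M))).

(* g in SL3 is (identified with) the isometry rho(baba): [M] |-> [g M] *)
Definition represents_baba (B g : 'M[R]_3) : Prop :=
  SL3 g /\ forall M, SL3 M -> sameX (rho_baba B M) (g *m M).

Definition Bmat (r s t al be : R) : 'M[R]_3 :=
  mexp (r *: p0 + t *: (Rot (be / 2) *m p1 *m Rot (- (be / 2))))
  *m mexp (s *: (Rot al *m f1 *m Rot (- al))).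

End Defs.

(* Main.v *)
Require Import Defs.
From mathcomp Require Import all_boot all_order all_algebra.
From mathcomp Require Import all_classical all_reals all_analysis.
From mathcomp Require Import ring lra.
Set Implicit Arguments. Unset Strict Implicit. Unset Printing Implicit Defensive.
Import Order.TTheory GRing.Theory Num.Theory.
Local Open Scope ring_scope.

Section M3.
Import numFieldNormedType.Exports.
Local Open Scope classical_set_scope.
Local Open Scope ring_scope.
Variable R : realType.
Implicit Types x y : R.
Definition M3 (a b c d e f g h i : R) : 'M[R]_3 :=
  mx3 [:: [:: a; b; c]; [:: d; e; f]; [:: g; h; i]].

Ltac m3tac := apply/matrixP => -[[|[|[|//]]] ?] -[[|[|[|//]]] ?];
  rewrite /M3 /mx3 !mxE ?big_ord_recl ?big_ord0 ?mxE /= ?mxE /=.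

Lemma mul3 a b c d e f g h i a' b' c' d' e' f' g' h' i' :
  M3 a b c d e f g h i *m M3 a' b' c' d' e' f' g' h' i' =
  M3 (a*a'+b*d'+c*g') (a*b'+b*e'+c*h') (a*c'+b*f'+c*i')
     (d*a'+e*d'+f*g') (d*b'+e*e'+f*h') (d*c'+e*f'+f*i')
     (g*a'+h*d'+i*g') (g*b'+h*e'+i*h') (g*c'+h*f'+i*i').
Proof. m3tac; by rewrite ?addr0 ?addrA. Qed.

Lemma tr3 a b c d e f g h i : \tr (M3 a b c d e f g h i) = a + e + i.
Proof. by rewrite /mxtrace !big_ord_recl !big_ord0 /M3 /mx3 !mxE /= addr0 addrA. Qed.

Lemma trmx3 a b c d e f g h i : (M3 a b c d e f g h i)^T = M3 a d g b e h c f i.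
Proof. m3tac; done. Qed.

Lemma id3 : (1%:M : 'M[R]_3) = M3 1 0 0 0 1 0 0 0 1.
Proof. m3tac; done. Qed.

Lemma zero3 : (0 : 'M[R]_3) = M3 0 0 0 0 0 0 0 0 0.
Proof. m3tac; done. Qed.

Lemma add3 a b c d e f g h i a' b' c' d' e' f' g' h' i' :
  M3 a b c d e f g h i + M3 a' b' c' d' e' f' g' h' i' =
  M3 (a+a') (b+b') (c+c') (d+d') (e+e') (f+f') (g+g') (h+h') (i+i').
Proof. m3tac; done. Qed.

Lemma scale3 x a b c d e f g h i :
  x *: M3 a b c d e f g h i = M3 (x*a) (x*b) (x*c) (x*d) (x*e) (x*f) (x*g) (x*h) (x*i).
Proof. m3tac; done. Qed.

Lemma M3_of (A : 'M[R]_3) : A = M3 (A 0 0) (A 0 1) (A 0 2) (A 1 0) (A 1 1) (A 1 2) (A 2 0) (A 2 1) (A 2 2).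
Proof. apply/matrixP => k l; rewrite /M3 /mx3 !mxE.
case: k => [[|[|[|//]]] ?]; case: l => [[|[|[|//]]] ?] /=; congr (A _ _); exact: val_inj. Qed.

Lemma M3_eq a b c d e f g h i a' b' c' d' e' f' g' h' i' :
  M3 a b c d e f g h i = M3 a' b' c' d' e' f' g' h' i' ->
  a = a' /\ b = b' /\ c = c' /\ d = d' /\ e = e' /\ f = f' /\ g = g' /\ h = h' /\ i = i'.
Proof.
move=> E; have F k l : M3 a b c d e f g h i k l = M3 a' b' c' d' e' f' g' h' i' k l by rewrite E.
move: (F 0 0) (F 0 1) (F 0 2) (F 1 0) (F 1 1) (F 1 2) (F 2 0) (F 2 1) (F 2 2).
by rewrite /M3 /mx3 !mxE /=.
Qed.

Lemma ent3 (Q Q' : 'M[R]_3) x y z i j :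
  (Q *m M3 x 0 0 0 y 0 0 0 z *m Q') i j =
  Q i 0 * x * Q' 0 j + Q i 1 * y * Q' 1 j + Q i 2 * z * Q' 2 j.
Proof.
rewrite [Q]M3_of [Q']M3_of !mul3 /M3 /mx3 !mxE.
case: i => [[|[|[|//]]] ?]; case: j => [[|[|[|//]]] ?] /=; ring.
Qed.

Lemma exp_cvg (d : R) :
  (fun n => \sum_(k < n) (k`!%:R)^-1 * d ^+ k) @ \oo --> expR d.
Proof.
have -> : (fun n => \sum_(k < n) (k`!%:R)^-1 * d ^+ k) = series (exp_coeff d).
  apply/funext => n; rewrite /series /= big_mkord; apply: eq_bigr => k _.
  by rewrite /exp_coeff /= mulrC.
by apply: cvg_toP; [exact: is_cvg_series_exp_coeff | by []].
Qed.

Lemma mexp_conj_diag (Q Q' : 'M[R]_3) d1 d2 d3 :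
  Q' *m Q = 1%:M -> Q *m Q' = 1%:M ->
  mexp (Q *m M3 d1 0 0 0 d2 0 0 0 d3 *m Q') =
  Q *m M3 (expR d1) 0 0 0 (expR d2) 0 0 0 (expR d3) *m Q'.
Proof.
move=> hl hr.
pose e (d : R) n := \sum_(k < n) (k`!%:R)^-1 * d ^+ k.
have pw k : (Q *m M3 d1 0 0 0 d2 0 0 0 d3 *m Q') ^+ k =
            Q *m M3 (d1^+k) 0 0 0 (d2^+k) 0 0 0 (d3^+k) *m Q'.
  elim: k => [|k IH]; first by rewrite !expr0 -id3 mulmx1 hr.
  rewrite exprS IH -mulmxE !mulmxA -[_ *m Q' *m Q]mulmxA hl mulmx1 -(mulmxA Q (M3 d1 _ _ _ _ _ _ _ _)) mul3.
  congr (_ *m _ *m _); congr M3; rewrite ?exprS; ring.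
have ps n : (\sum_(k < n) (k`!%:R)^-1 *: (Q *m M3 d1 0 0 0 d2 0 0 0 d3 *m Q') ^+ k) =
            Q *m M3 (e d1 n) 0 0 0 (e d2 n) 0 0 0 (e d3 n) *m Q'.
  elim: n => [|n IH].
    by rewrite !big_ord0 /e !big_ord0 -zero3 mulmx0 mul0mx.
  rewrite big_ord_recr /= IH pw /e !big_ord_recr /=.
  rewrite scalemxAl scalemxAr -mulmxDl -mulmxDr scale3 add3.
  congr (_ *m _ *m _); congr M3; ring.
apply/matrixP => i j; rewrite /mexp mxE.
rewrite (_ : (fun n => _) = fun n => Q i 0 * e d1 n * Q' 0 j + Q i 1 * e d2 n * Q' 1 j + Q i 2 * e d3 n * Q' 2 j); last first.
  by apply/funext => n; rewrite ps ent3.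
rewrite ent3; apply: cvg_lim; first exact: norm_hausdorff.
have cv (a b : R) d : (fun n => a * e d n * b) @ \oo --> a * expR d * b.
  have h1 := cvgMl_tmp (a := a) (@exp_cvg d). have h2 := cvgMr_tmp (b := b) (h1 eventually_filter). exact: (h2 eventually_filter).

have c1 := cv (Q i 0) (Q' 0 j) d1.
have c2 := cv (Q i 1) (Q' 1 j) d2.
have c3 := cv (Q i 2) (Q' 2 j) d3.
have c12 := @cvgD _ _ _ _ eventually_filter _ _ _ _ c1 c2.
exact: (@cvgD _ _ _ _ eventually_filter _ _ _ _ c12 c3).
Qed.

Lemma RotE x : Rot x = M3 1 0 0 0 (cos x) (- sin x) 0 (sin x) (cos x).
Proof. by []. Qed.

Lemma RotD x y : Rot x *m Rot y = Rot (x + y).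
Proof. rewrite !RotE mul3 cosD sinD; congr M3; ring. Qed.

Lemma Rot0 : Rot (0 : R) = 1%:M.
Proof. by rewrite RotE cos0 sin0 oppr0 id3. Qed.

Lemma RotK x : Rot (- x) *m Rot x = 1%:M.
Proof. by rewrite RotD addNr Rot0. Qed.

Lemma RotKV x : Rot x *m Rot (- x) = 1%:M.
Proof. by rewrite RotD addrN Rot0. Qed.

Lemma Rot_tr x : (Rot x)^T = Rot (- x).
Proof. by rewrite !RotE trmx3 cosN sinN opprK. Qed.

Lemma RotC x y : Rot x *m Rot y = Rot y *m Rot x.
Proof. by rewrite !RotD addrC. Qed.

Lemma cos_2pi3 : cos (2 * pi / 3) = - 1 / 2 :> R.
Proof.
set y := 2 * pi / 3.
have h3 : cos (y + (y + y)) = 1.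
  by rewrite (_ : y + (y + y) = pi *+ 2) ?cos2pi // /y; field.
have sy : 0 < sin y.
  apply: sin_gt0_pi; rewrite /y; have := pi_gt0 R; move=> hp; apply/andP; split; lra.
move: h3; rewrite cosD cosD sinD.
have hs := sin2cos2 y.
move=> h.
have e : (cos y - 1) * (2 * cos y + 1) ^+ 2 = 0.
  have -> : (cos y - 1) * (2 * cos y + 1) ^+ 2 = cos y * (cos y * cos y - sin y * sin y) -
    sin y * (sin y * cos y + cos y * sin y) - 1.
    rewrite -!expr2 ?hs; ring: hs.
  by rewrite h subrr.
move/eqP: e; rewrite mulf_eq0 => /orP[|].
  rewrite subr_eq0 => /eqP c1.
  by move: hs; rewrite c1 expr1n subrr => /eqP; rewrite sqrf_eq0 => /eqP s0; move: sy; rewrite s0 ltxx.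
rewrite sqrf_eq0 => /eqP e; lra.
Qed.

Definition Dm a1 a2 a3 := M3 a1 0 0 0 a2 0 0 0 a3.
Definition Hm (ch sh : R) := M3 ch sh 0 sh ch 0 0 0 1.
Definition Q0 := M3 1 1 0 1 (-1) 0 0 0 1.
Definition Q0' := M3 (1/2) (1/2) 0 (1/2) (-1/2) 0 0 0 1.

Lemma Q0K : Q0' *m Q0 = 1%:M.
Proof. by rewrite /Q0 /Q0' mul3 id3; congr M3; field. Qed.
Lemma Q0KV : Q0 *m Q0' = 1%:M.
Proof. by rewrite /Q0 /Q0' mul3 id3; congr M3; field. Qed.

Lemma arg1E (r t b : R) : r *: p0 R + t *: (Rot b *m p1 R *m Rot (- b)) =
  Rot b *m Dm (r*2) (r*(-1) + t*2^-1) (r*(-1) + t*(-2^-1)) *m Rot (-b).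
Proof.
rewrite (_ : p0 R = M3 2 0 0 0 (-1) 0 0 0 (-1)) // (_ : p1 R = M3 0 0 0 0 (2^-1) 0 0 0 (- 2^-1)) //.
have hs := sin2cos2 b.
rewrite /Dm !RotE !mul3 !scale3 add3 cosN sinN; congr M3; ring: hs.
Qed.

Lemma arg2E (s al : R) : s *: (Rot al *m f1 R *m Rot (- al)) =
  (Rot al *m Q0) *m Dm s (-s) 0 *m (Q0' *m Rot (-al)).
Proof.
rewrite (_ : f1 R = M3 0 1 0 1 0 0 0 0 0) //.
have hs := sin2cos2 al.
by rewrite /Dm /Q0 /Q0' !RotE !mul3 !scale3 cosN sinN; congr M3; field: hs.
Qed.

Lemma HmE (s : R) : Q0 *m M3 (expR s) 0 0 0 (expR (-s)) 0 0 0 (expR 0) *m Q0' = Hm (coshR s) (sinhR s).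
Proof. by rewrite /Q0 /Q0' /Hm !mul3 expR0 /coshR /sinhR; congr M3; field. Qed.

Lemma BmatE r s t al be : Bmat r s t al be =
  Rot (be/2) *m (Dm (expR (r*2)) (expR (r*(-1) + t*2^-1)) (expR (r*(-1) + t*(-2^-1)))
     *m Rot (al - be/2) *m Hm (coshR s) (sinhR s) *m Rot (- (al - be/2))) *m Rot (- (be/2)).
Proof.
rewrite /Bmat arg1E arg2E !mexp_conj_diag ?RotK ?RotKV //; last 2 first.
- by rewrite mulmxA -(mulmxA Q0') RotK mulmx1 Q0K.
- by rewrite mulmxA -(mulmxA _ Q0) Q0KV mulmx1 RotKV.
rewrite -HmE.
have e2 : Rot (- al) = Rot (- (al - be/2)) *m Rot (- (be/2)).
  by rewrite RotD; congr Rot; ring.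
have e1 : Rot (- (be/2)) *m Rot al = Rot (al - be/2).
  by rewrite RotD; congr Rot; ring.
rewrite e2 !mulmxA; do 5 congr (_ *m _).
by rewrite /Dm -(mulmxA _ (Rot (- (be/2)))) e1.
Qed.

Definition Xm (C S c s : R) := M3 C (S*c) (S*s) (S*c) (C*c^+2 + s^+2) ((C-1)*c*s)
   (S*s) ((C-1)*c*s) (C*s^+2 + c^+2).

Lemma FS (ps a1 a2 a3 c s u : R) : cos ps = -1/2 -> (2 * sin ps)^+2 = 3 ->
  a1 != 0 -> a2 != 0 -> a3 != 0 -> u != 0 -> s^+2 = 1 - c^+2 ->
  \tr (Rot ps *m (Dm a1 a2 a3 *m Xm ((u^+2 + u^-2)/2) ((u^+2 - u^-2)/2) c s *m Dm a1 a2 a3) *m Rot ps *m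
       (Dm a1^-1 a2^-1 a3^-1 *m Xm ((u^+2 + u^-2)/2) (-((u^+2 - u^-2)/2)) c s *m Dm a1^-1 a2^-1 a3^-1)) =
  - (3/2) * ((u^+2 + u^-2)/2) * (((a2/a3)^+2 + (a3/a2)^+2)/2) + (9/4) * ((u^+2 + u^-2)/2)^+2 - 3/4
   - 3 * (2*s*c)^+2 * ((((u^+2 + u^-2)/2)-1)/2)^+2 * ((a2/a3 - a3/a2)/2)^+2.
Proof.
move=> hc hq h1 h2 h3 hu hs.
have hsn : sin ps = (2 * sin ps) / 2 by field.
move: hq hsn; set q := 2 * sin ps => hq hsn.
rewrite RotE hc hsn /Dm /Xm !mul3 tr3; clearbody q; clear hsn hc.
field: hs hq.
by rewrite h1 h2 h3 hu.
Qed.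

Lemma RHR x (ch sh : R) : Rot x *m Hm ch sh *m Rot (- x) = Xm ch sh (cos x) (sin x).
Proof. by rewrite !RotE /Hm /Xm !mul3 cosN sinN; congr M3; ring. Qed.

Lemma XmT C S c s : (Xm C S c s)^T = Xm C S c s.
Proof. by rewrite /Xm trmx3. Qed.

Lemma DmT a1 a2 a3 : (Dm a1 a2 a3)^T = Dm a1 a2 a3.
Proof. by rewrite /Dm trmx3. Qed.

Lemma XmM C S c s : s^+2 = 1 - c^+2 ->
  Xm C S c s *m Xm C S c s = Xm (C^+2 + S^+2) (2 * C * S) c s.
Proof. by move=> hs; rewrite /Xm mul3; congr M3; ring: hs. Qed.

Lemma XmK C S c s : s^+2 = 1 - c^+2 -> C^+2 = 1 + S^+2 ->
  Xm C S c s *m Xm C (-S) c s = 1%:M.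
Proof. by move=> hs hC; rewrite /Xm mul3 id3; congr M3; ring: hs hC. Qed.

Lemma DmK a1 a2 a3 : a1 != 0 -> a2 != 0 -> a3 != 0 ->
  Dm a1 a2 a3 *m Dm a1^-1 a2^-1 a3^-1 = 1%:M.
Proof. by move=> h1 h2 h3; rewrite /Dm mul3 id3; congr M3; field. Qed.

Lemma conjM x (X Y : 'M[R]_3) :
  Rot x *m X *m Rot (- x) *m (Rot x *m Y *m Rot (- x)) = Rot x *m (X *m Y) *m Rot (- x).
Proof. by rewrite !mulmxA -(mulmxA _ (Rot (- x)) (Rot x)) RotK mulmx1. Qed.

Lemma conj_tr x (Y : 'M[R]_3) : \tr (Rot x *m Y *m Rot (- x)) = \tr Y.
Proof. by rewrite mxtrace_mulC mulmxA RotK mul1mx. Qed.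

Lemma conjR x y : Rot y = Rot x *m Rot y *m Rot (- x).
Proof. by rewrite RotC -mulmxA RotKV mulmx1. Qed.

Lemma inv_uniq (A X : 'M[R]_3) : A *m X = 1%:M -> invmx A = X.
Proof.
move=> h; have [Au _] := mulmx1_unit h.
by rewrite -[invmx A]mulmx1 -h mulmxA mulVmx // mul1mx.
Qed.

Lemma detRot x : \det (Rot x) = 1.
Proof.
have h1 : \det (Rot x) * \det (Rot (- x)) = 1 by rewrite -det_mulmx RotKV det1.
have h2 : \det (Rot (- x)) = \det (Rot x) by rewrite -Rot_tr det_tr.
have h3 : \det (Rot x) = \det (Rot (x / 2)) ^+ 2.
  by rewrite expr2 -det_mulmx RotD; congr (\det (Rot _)); field.
move: h1; rewrite h2 h3; set e := \det (Rot (x / 2)) => h1.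
clearbody e.
have hh : (e^+2 - 1) * (e^+2 + 1) = e^+2 * e^+2 - 1 by ring.
have : (e^+2 - 1) * (e^+2 + 1) = 0 by rewrite hh h1 subrr.
move/eqP; rewrite mulf_eq0 => /orP[|]; first by rewrite subr_eq0 => /eqP.
move=> /eqP h; have : 0 <= e^+2 by exact: sqr_ge0.
lra.
Qed.

Lemma det_low a d e g h i : \det (M3 a 0 0 d e 0 g h i) = a * e * i.
Proof.
rewrite det_trig; last first.
  by apply/is_trig_mxP => -[[|[|[|//]]] ?] -[[|[|[|//]]] ?] //= _; rewrite /M3 /mx3 mxE.
by rewrite !big_ord_recl big_ord0 /M3 /mx3 !mxE /= mulr1 mulrA.
Qed.

Lemma comm_of (K1 K M : 'M[R]_3) : K1^T *m K1 = 1%:M -> K^T *m K = 1%:M ->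
  K1 *m M = M *m K -> K1 *m (M *m M^T) = (M *m M^T) *m K1.
Proof.
move=> h1 h2 h3.
have h2' : K *m K^T = 1%:M by apply: mulmx1C.
have e : M^T = K *m M^T *m K1^T.
  have : M^T *m K1^T = K^T *m M^T by rewrite -!trmx_mul h3.
  by move=> h; rewrite -mulmxA h mulmxA h2' mul1mx.
by rewrite {2}e !mulmxA -h3 -!mulmxA h1 mulmx1.
Qed.
End M3.

Theorem proposition4p5 (R : realType) (s t r al be : R) :
  0 <= s -> 0 <= t ->
  let B := Bmat r s t al be in
  let th := 2 * al - be in
  let E := - (3 / 2) * coshR (2 * s) * coshR (2 * t)
           + (9 / 4) * coshR (2 * s) ^+ 2 - 3 / 4
           - 3 * sin th ^+ 2 * sinhR s ^+ 4 * sinhR t ^+ 2 in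
  (exists g, represents_baba B g) /\
  (forall g, represents_baba B g ->
     \tr g = E /\ \tr (invmx g) = E).
Proof.
move=> _ _ B th E.
set b := be / 2. set ph := al - be / 2.
set a1 := expR (r * 2). set a2 := expR (r * (-1) + t * 2^-1).
set a3 := expR (r * (-1) + t * (- 2^-1)).
set u := expR s.
set c := cos ph. set sn := sin ph.
have a1n : a1 != 0 by rewrite gt_eqF // expR_gt0.
have a2n : a2 != 0 by rewrite gt_eqF // expR_gt0.
have a3n : a3 != 0 by rewrite gt_eqF // expR_gt0.
have un : u != 0 by rewrite gt_eqF // expR_gt0.
have hs : sn ^+ 2 = 1 - c ^+ 2 by rewrite sin2cos2.
set chu := (u + u^-1) / 2. set shu := (u - u^-1) / 2.
set Cu := (u^+2 + u^-2) / 2. set Su := (u^+2 - u^-2) / 2.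
set N := Dm a1 a2 a3 *m Xm chu shu c sn.
have hB : B = Rot b *m N *m Rot (- b).
  rewrite /B BmatE; congr (_ *m _ *m _).
  rewrite -!mulmxA; congr (_ *m _); rewrite mulmxA RHR /coshR /sinhR expRN //.
set M1 := Dm a1 a2 a3 *m Xm Cu Su c sn *m Dm a1 a2 a3.
set M2 := Dm a1^-1 a2^-1 a3^-1 *m Xm Cu (- Su) c sn *m Dm a1^-1 a2^-1 a3^-1.
have hNN : N *m N^T = M1.
  rewrite /N trmx_mul XmT DmT !mulmxA -(mulmxA (Dm a1 a2 a3)) XmM //.
  by rewrite /M1; congr (_ *m Xm _ _ _ _ *m _); rewrite /Cu /chu /shu /Su; field.
have hCS : Cu ^+ 2 = 1 + Su ^+ 2 by rewrite /Cu /Su; field.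
have M12 : M1 *m M2 = 1%:M.
  rewrite /M1 /M2 !mulmxA -(mulmxA _ (Dm a1 a2 a3)) DmK // mulmx1.
  by rewrite -(mulmxA (Dm a1 a2 a3)) XmK // mulmx1 DmK.
have M21 : M2 *m M1 = 1%:M by apply: mulmx1C.
set P := B *m B^T.
have hP : P = Rot b *m M1 *m Rot (- b).
  have hBT : B^T = Rot b *m N^T *m Rot (- b).
    by rewrite hB !trmx_mul !Rot_tr opprK mulmxA.
  by rewrite /P hBT hB conjM hNN.
have hPi : P *m (Rot b *m M2 *m Rot (- b)) = 1%:M.
  by rewrite hP conjM M12 mulmx1 RotKV.
have Pu : P \in unitmx by have [] := mulmx1_unit hPi.
have invP : invmx P = Rot b *m M2 *m Rot (- b) by apply: inv_uniq.
pose ps : R := 2 * pi / 3.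
pose W := Rot ps.
pose g0 := W *m P *m W *m invmx P.
have g0E : g0 = Rot b *m (W *m M1 *m W *m M2) *m Rot (- b).
  by rewrite /g0 invP hP /W {1 2}(conjR b ps) !conjM.
pose g0' := P *m Rot (- ps) *m invmx P *m Rot (- ps).
have g0E' : g0' = Rot b *m (M1 *m Rot (- ps) *m M2 *m Rot (- ps)) *m Rot (- b).
  by rewrite /g0' invP hP {1 2}(conjR b (- ps)) !conjM.
have ZZ : (W *m M1 *m W *m M2) *m (M1 *m Rot (- ps) *m M2 *m Rot (- ps)) = 1%:M.
  clearbody M1 M2.
  rewrite !mulmxA -(mulmxA _ M2 M1) M21 mulmx1.
  rewrite -(mulmxA _ W (Rot (- ps))) RotKV mulmx1 -(mulmxA _ M1 M2) M12 mulmx1.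
  by rewrite /W RotKV.
have gg : g0 *m g0' = 1%:M by rewrite g0E g0E' conjM ZZ mulmx1 RotKV.
have ginv : invmx g0 = g0' by apply: inv_uniq.
have hc : cos ps = -1/2 by apply: cos_2pi3.
have hq : (2 * sin ps) ^+ 2 = 3.
  by rewrite exprMn sin2cos2 hc; field.
pose Efs := - (3/2) * Cu * (((a2/a3)^+2 + (a3/a2)^+2)/2) + (9/4) * Cu^+2 - 3/4
   - 3 * (2*sn*c)^+2 * ((Cu-1)/2)^+2 * ((a2/a3 - a3/a2)/2)^+2.
have trg0 : \tr g0 = Efs.
  rewrite g0E conj_tr /W /M1 /M2 /Efs /Cu /Su; exact: (FS hc hq a1n a2n a3n un hs).
have trg0' : \tr g0' = Efs.
  have hc' : cos (- ps) = -1/2 by rewrite cosN.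
  have hq' : (2 * sin (- ps)) ^+ 2 = 3 by rewrite sinN mulrN sqrrN.
  have trc : forall (A C V : 'M[R]_3), \tr (A *m V *m C *m V) = \tr (V *m A *m V *m C).
    by move=> A C V; rewrite mxtrace_mulC !mulmxA.
  rewrite g0E' conj_tr trc /M1 /M2 /Efs /Cu /Su.
  exact: (FS hc' hq' a1n a2n a3n un hs).
have hEE : E = Efs.
  have e2s : 2 * s = s + s by ring.
  have hC2s : coshR (2 * s) = Cu.
    by rewrite /coshR /Cu e2s expRN expRD -/u; field.
  have hat : a2 / a3 = expR t.
    by rewrite /a2 /a3 -expRN -expRD; congr expR; field.
  have hta : a3 / a2 = (expR t)^-1 by rewrite -hat invf_div.
  have hC2t : coshR (2 * t) = ((a2/a3)^+2 + (a3/a2)^+2)/2.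
    rewrite hat hta /coshR (_ : 2 * t = t + t); last by ring.
    by rewrite expRN expRD; field; rewrite ?gt_eqF ?expR_gt0.
  have hsin : sin th = 2 * sn * c.
    have eth : th = ph + ph by rewrite /th /ph; field.
    by rewrite eth sinD -/c -/sn; ring.
  have hsh : sinhR s ^+ 4 = ((Cu - 1)/2)^+2.
    by rewrite /sinhR expRN -/u /Cu; field.
  have hsht : sinhR t ^+ 2 = ((a2/a3 - a3/a2)/2)^+2.
    by rewrite hat hta /sinhR expRN.
  by rewrite /E hC2s hC2t hsin hsh hsht /Efs; ring.
have detW : \det W = 1 by apply: detRot.
have g0d : \det g0 = 1.
  rewrite /g0 3!det_mulmx detW det_inv mul1r mulr1 mulrV //.
have g0u : g0 \in unitmx by rewrite unitmxE g0d unitr1.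
have hPT : P^T = P by rewrite /P trmx_mul trmxK.
have rhoE : forall M, SL3 M -> rho_baba B M = g0 *m M.
  move=> M hM.
  have Mu : M \in unitmx by rewrite unitmxE hM unitr1.
  rewrite /rho_baba /rho_b /rho_a -/P -/ps -/W.
  have hm : mstar M *m M^T = 1%:M by rewrite /mstar -trmx_mul mulmxV // trmx1.
  have i1 : invmx (W *m (P *m mstar M)) = M^T *m invmx P *m Rot (- ps).
    apply: inv_uniq.
    have WK : W *m Rot (- ps) = 1%:M by apply: RotKV.
    clearbody P W; rewrite !mulmxA -(mulmxA _ (mstar M)) hm mulmx1 -(mulmxA _ P) mulmxV // mulmx1.
    by rewrite WK.
  rewrite [mstar (W *m _)]/mstar i1 !trmx_mul trmxK Rot_tr opprK trmx_inv hPT.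
  by rewrite /g0 !mulmxA.
split.
  exists g0; split; first exact: g0d.
  move=> M hM; exists 1%:M; split.
    by rewrite /SO3 trmx1 mulmx1 det1.
  by rewrite rhoE // mulmx1.
move=> g [_ hg].
have key : forall M, SL3 M -> exists K, SO3 K /\ g *m M = g0 *m M *m K.
  by move=> M hM; rewrite -rhoE //; apply: hg.
have [K1 [[hK1o hK1d] e1]] := key 1%:M (det1 _ _).
rewrite !mulmx1 in e1.
have comm : forall M, SL3 M -> K1 *m (M *m M^T) = M *m M^T *m K1.
  move=> M hM; have [K [[hKo _] eK]] := key M hM.
  apply: comm_of hK1o hKo _.
  have := congr1 (mulmx (invmx g0)) eK; clearbody g0.
  by rewrite e1 !mulmxA mulVmx // !mul1mx.
have eK1 := M3_of K1.
move: (K1 0 0) (K1 0 1) (K1 0 2) (K1 1 0) (K1 1 1) (K1 1 2) (K1 2 0) (K1 2 1) (K1 2 2) eK1.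
move=> k00 k01 k02 k10 k11 k12 k20 k21 k22 eK1.
have s1 : SL3 (Dm (2 : R) 1 (1/2)) by rewrite /SL3 /Dm det_low; field.
have s2 : SL3 (M3 (1 : R) 0 0 1 1 0 0 0 1) by rewrite /SL3 det_low; ring.
have s3 : SL3 (M3 (1 : R) 0 0 0 1 0 0 1 1) by rewrite /SL3 det_low; ring.
have c1 := comm _ s1.
have c2 := comm _ s2.
have c3 := comm _ s3.
rewrite eK1 /Dm !trmx3 !mul3 in c1 c2 c3.
case/M3_eq: c1 => f00 [f01 [f02 [f10 [f11 [f12 [f20 [f21 f22]]]]]]].
have z01 : k01 = 0 by lra.
have z02 : k02 = 0 by lra.
have z10 : k10 = 0 by lra.
have z12 : k12 = 0 by lra.
have z20 : k20 = 0 by lra.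
have z21 : k21 = 0 by lra.
rewrite z01 z02 z10 z12 z20 z21 in c2 c3 eK1.
case/M3_eq: c2 => g00 [g01 [g02 [g10 [g11 [g12 [g20 [g21 g22]]]]]]].
case/M3_eq: c3 => h00 [h01 [h02 [h10 [h11 [h12 [h20 [h21 h22]]]]]]].
have y1 : k11 = k00 by lra.
have y2 : k22 = k00 by lra.
rewrite y1 y2 in eK1.
rewrite eK1 trmx3 mul3 id3 in hK1o.
case/M3_eq: hK1o => o1 _.
rewrite eK1 det_low in hK1d.
have k1 : k00 = 1.
  have : k00 = k00 * (k00 * k00 + 0 * 0 + 0 * 0) by rewrite o1 mulr1.
  by rewrite mulr0 !addr0 mulrA hK1d.
rewrite k1 -id3 in eK1.
rewrite e1 eK1 mulmx1.
by rewrite trg0 ginv trg0' hEE.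
Qed.
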